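(* Let $(V,E,\mu)$ be an infinite, connected, locally finite weighted graph, $o\in V$, and $p>0$. If $$\sum_{n=1}^\infty n\Big(\sum_{k=n}^\infty\frac{k}{\mu(B_k)}\Big)^p=\infty,$$ then $$\sum_{n=1}^\infty n\Big(\sum_{k=n}^\infty\frac1{b_k}\Big)^p=\infty.$$
   Context: Weighted graph: $\mu_{xy}=\mu_{yx}\ge0$, $\mu_{xy}>0$ iff $x\sim y$, $\mu(x)=\sum_{y\sim x}\mu_{xy}$, $\mu(A)=\sum_{x\in A}\mu(x)$. $d$ is graph distance, $B_k=\{x:d(o,x)\le k\}$, and $b_k=\sum_{x\in B_k,\,y\notin B_k,\,x\sim y}\mu_{xy}>0$. *)

(* Defs.v *)
From HB Require Import structures.
From mathcomp Require Import all_boot all_order all_algebra.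
From mathcomp Require Import all_classical all_reals all_analysis.
Set Implicit Arguments. Unset Strict Implicit. Unset Printing Implicit Defensive.
Import Order.TTheory GRing.Theory Num.Theory.
Local Open Scope classical_set_scope.
Local Open Scope ring_scope.

Section WeightedGraph.
Variables (R : realType) (V : choiceType) (mu : V -> V -> R).

Definition adj (x y : V) : bool := 0 < mu x y.

Definition weighted_graph : Prop :=
  (forall x y, mu x y = mu y x) /\ (forall x y, 0 <= mu x y).

Definition nbrs (x : V) : set V := [set y | adj x y].

Definition locally_finite : Prop := forall x, finite_set (nbrs x).

Definition connected_graph : Prop :=
  forall x y : V, exists s : seq V, path adj x s /\ last x s = y.

Definition infinite_graph : Prop := ~ finite_set [set: V].

Definition muv (x : V) : R := \sum_(y \in nbrs x) mu x y.

Definition muset (A : set V) : R := \sum_(x \in A) muv x.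

(* graph distance d(o,x) <= k  iff there is a walk of length <= k from o to x *)
Definition dist_le (o x : V) (k : nat) : Prop :=
  exists s : seq V, [/\ (size s <= k)%N, path adj o s & last o s = x].

Definition ball_k (o : V) (k : nat) : set V := [set x | dist_le o x k].

Definition bdry (o : V) (k : nat) : R :=
  \sum_(e \in [set e : V * V | [/\ ball_k o k e.1, ~ ball_k o k e.2 & adj e.1 e.2]])
     mu e.1 e.2.

End WeightedGraph.

(* Main.v *)
Require Import Defs.
From HB Require Import structures.
From mathcomp Require Import all_boot all_order all_algebra.
From mathcomp Require Import all_classical all_reals all_analysis.
From mathcomp Require Import ring lra zify.
Import Order.TTheory GRing.Theory Num.Theory.
Local Open Scope classical_set_scope.
Local Open Scope ring_scope.
Lemma half_facts (k : nat) : (0 < k)%N -> ((k.+1)./2 <= k)%N /\ (k <= (k.+1 - (k.+1)./2).*2)%N.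
Proof. move=> k0. split; lia. Qed.

Lemma keyA (R : realType) (a b M : nat -> R) :
  (forall i, 0 < b i) -> (forall i, a i = 1 / b i) ->
  (forall k, b k <= M k) -> (forall k, 0 <= M k) -> (forall k, b k <= M k.+1 - M k) ->
  forall k, (0 < k)%N ->
  k%:R / M k <= 8 / k%:R * \sum_((k.+1)./2 <= i < k.+1) a i.
Proof.
move=> bp aE bM M0 bD k k0.
have [hk km] := @half_facts k k0.
set h := (k.+1)./2 in hk km *.
have Mp : 0 < M k by exact: lt_le_trans (bp k) (bM k).
set B := \sum_(h <= i < k.+1) b i.
have HB : B <= 2 * M k.
  rewrite /B big_nat_recr //=.
  have : \sum_(h <= i < k) b i <= \sum_(h <= i < k) (M i.+1 - M i).
    by apply: ler_sum => i _; exact: bD.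
  rewrite telescope_sumr // => H1.
  have := bM k; have := M0 h; lra.
pose m := (k.+1 - h)%N%:R : R.
have Hm : k%:R <= 2 * m.
  by rewrite /m -natrM mul2n ler_nat.
pose t := k%:R / (4 * M k).
have t0 : 0 <= t by rewrite /t divr_ge0 // mulr_ge0 // ltW.
have Ha : forall i, 2 * t - t ^+ 2 * b i <= a i.
  move=> i; rewrite aE -subr_ge0.
  have -> : 1 / b i - (2 * t - t ^+ 2 * b i) = (1 - t * b i) ^+ 2 / b i.
    by field; rewrite gt_eqF.
  by rewrite divr_ge0 ?sqr_ge0 // ltW.
have HX : 2 * t * m - t ^+ 2 * B <= \sum_(h <= i < k.+1) a i.
  apply: le_trans (ler_sum _ (fun i _ => Ha i)).
  by rewrite sumrB sumr_const_nat /B mulr_sumr /m mulr_natr.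
have E : k%:R / M k = 8 / k%:R * (t * k%:R - t ^+ 2 * (2 * M k)).
  rewrite /t; field.
  by rewrite gt_eqF // pnatr_eq0 -lt0n.
rewrite E; apply: ler_wpM2l; first by rewrite divr_ge0.
apply: le_trans HX.
have h1 : t * k%:R <= t * (2 * m) by rewrite ler_wpM2l.
have h2 : t ^+ 2 * B <= t ^+ 2 * (2 * M k) by rewrite ler_wpM2l // sqr_ge0.
lra.
Qed.
Lemma sum_window (R : realType) (f : nat -> R) lo hi N : (hi <= N)%N ->
  \sum_(lo <= i < hi) f i = \sum_(0 <= i < N) (if (lo <= i < hi)%N then f i else 0).
Proof.
move=> hN.
rewrite (big_nat_widenl lo 0) // (big_nat_widen 0 hi N) // big_mkcond /=.
by apply: eq_bigr => i _.
Qed.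

Lemma count_window (n N i : nat) :
  (count (fun k => (i <= k < (i.*2).+1)%N) (index_iota n N) <= i.+1)%N.
Proof.
rewrite -size_filter.
have -> : i.+1 = size (index_iota i (i.*2).+1) by rewrite size_iota; lia.
apply: uniq_leq_size; first by apply: filter_uniq; exact: iota_uniq.
by move=> k; rewrite mem_filter !mem_index_iota => /andP[+ _].
Qed.

Lemma sum_cst_cond (R : realType) (s : seq nat) (P : pred nat) (c : R) :
  \sum_(k <- s) (if P k then c else 0) = c * (count P s)%:R.
Proof.
rewrite -big_mkcond /= -sum1_count natr_sum mulr_sumr.
by apply: eq_bigr => k _; rewrite mulr1.
Qed.

Lemma keyB (R : realType) (a c : nat -> R) :
  (forall i, 0 <= a i) ->
  (forall k, (0 < k)%N -> c k <= 8 / k%:R * \sum_((k.+1)./2 <= i < k.+1) a i) ->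
  forall n N, (0 < n)%N ->
  \sum_(n <= k < N) c k <= 16 * \sum_((n.+1)./2 <= i < N) a i.
Proof.
move=> a0 cle n N n0.
pose w k i : R := if ((k.+1)./2 <= i < k.+1)%N then 8 / k%:R else 0.
have S1 : \sum_(n <= k < N) c k <= \sum_(n <= k < N) \sum_(0 <= i < N) w k i * a i.
  rewrite big_nat [X in _ <= X]big_nat; apply: ler_sum => k /andP[nk kN].
  apply: le_trans (cle k (leq_trans n0 nk)) _.
  rewrite mulr_sumr (@sum_window _ _ _ _ N kN) le_eqVlt; apply/orP; left; apply/eqP.
  by apply: eq_bigr => i _; rewrite /w; case: ifP => _; rewrite ?mul0r ?mulr0.
apply: le_trans S1 _.
rewrite exchange_big_nat /=.
rewrite (big_nat_widenl ((n.+1)./2) 0) // big_mkcond mulr_sumr /=.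
apply: ler_sum => i _.
rewrite -mulr_suml.
case: ifP => hi; last first.
  rewrite big_nat big1 ?mul0r ?mulr0 // => k /andP[nk _].
  rewrite /w ifF // ; apply/negbTE; apply/negP => /andP[h1 _].
  move/negbT: hi; rewrite -ltnNge => hi; lia.
apply: ler_wpM2r => //.
have i0 : (0 < i)%N by lia.
have iR : 0 < i%:R :> R by rewrite ltr0n.
apply: (@le_trans _ _ (\sum_(n <= k < N) (if (i <= k < (i.*2).+1)%N then 8 / i%:R else 0 : R))).
  rewrite big_nat [X in _ <= X]big_nat; apply: ler_sum => k /andP[nk _].
  rewrite /w; case: ifP => hk; last by case: ifP.
  have k0 : (0 < k)%N by lia.
  rewrite ifT; last by apply/andP; split; lia.
  rewrite ler_pM2l // lef_pV2 ?posrE ?ltr0n // ler_nat; lia.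
rewrite sum_cst_cond.
have := count_window n N i; rewrite -(ler_nat R) => hc.
apply: le_trans (ler_wpM2l _ hc) _; first by rewrite divr_ge0 // ltW.
have h1 : 1 <= i%:R :> R by rewrite ler1n.
rewrite mulrC mulrA ler_pdivrMr // -natr1; lra.
Qed.
Lemma pairing (R : realType) (g : nat -> R) : (forall m, 0 <= g m) ->
  forall N, \sum_(1 <= n < N) n%:R * g ((n.+1)./2) <= 4 * \sum_(1 <= m < N) m%:R * g m.
Proof.
move=> g0.
have P : forall K, \sum_(1 <= n < K.*2.+1) n%:R * g ((n.+1)./2)
   <= 4 * \sum_(1 <= m < K.+1) m%:R * g m.
  elim => [|K IH]; first by rewrite !big_geq.
  rewrite doubleS big_nat_recr // big_nat_recr // [X in _ <= 4 * X]big_nat_recr //=.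
  rewrite doubleK uphalf_double.
  rewrite mulrDr -addrA lerD //.
  rewrite -mulrDl mulrA ler_wpM2r // -natrD -natrM ler_nat; lia.
move=> N.
have [N0|N1] := leqP N 1.
  by rewrite !big_geq.
have := P N.-1; rewrite prednK; last by lia.
apply: le_trans.
rewrite [X in _ <= X](@big_cat_nat _ _ _ N) /=; try lia.
rewrite lerDl sumr_ge0 // => i _.
by rewrite mulr_ge0.
Qed.
Lemma fsum_le_pw (R : realType) (T : choiceType) (P : set T) (f g : T -> R) :
  finite_set P -> (forall i, P i -> f i <= g i) ->
  \sum_(i \in P) f i <= \sum_(i \in P) g i.
Proof.
move=> Pfin fg; rewrite !fsbig_finite //.
rewrite big_seq [X in _ <= X]big_seq; apply: ler_sum => i.
by rewrite in_fset_set // inE => /fg.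
Qed.

Lemma fsum_sub_le (R : realType) (T : choiceType) (P Q : set T) (f : T -> R) :
  (forall i, 0 <= f i) -> P `<=` Q -> finite_set (Q `&` f @^-1` [set~ 0]) ->
  \sum_(i \in P) f i <= \sum_(i \in Q) f i.
Proof.
move=> f0 PQ Qfin.
rewrite fsbig_supp [X in _ <= X]fsbig_supp.
set P' := P `&` _; set Q' := Q `&` _.
have PQ' : P' `<=` Q' by move=> x [Px Fx]; split => //; exact: PQ.
have P'fin : finite_set P' := sub_finite_set PQ' Qfin.
rewrite -(setDUK PQ') fsbigU0 //; last 2 first.
- exact: sub_finite_set (@subDsetl _ _ _) Qfin.
- by move=> x [Px [_ nPx]].
by rewrite lerDl fsumr_ge0.
Qed.
Lemma ball0 (R : realType) (V : choiceType) (mu : V -> V -> R) o :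
  ball_k mu o 0 = [set o].
Proof.
apply/seteqP; split => x /=.
  by case => -[|? ?] [] //= _ _ <-.
by move=> ->; exists [::].
Qed.

Lemma ball_mono (R : realType) (V : choiceType) (mu : V -> V -> R) o k :
  ball_k mu o k `<=` ball_k mu o k.+1.
Proof. by move=> x [s [hs hp hl]]; exists s; split => //; exact: leqW. Qed.

Lemma ball_step (R : realType) (V : choiceType) (mu : V -> V -> R) o k x y :
  ball_k mu o k x -> adj mu x y -> ball_k mu o k.+1 y.
Proof.
move=> [s [hs hp hl]] xy; exists (rcons s y); split.
- by rewrite size_rcons.
- by rewrite rcons_path hp hl.
- by rewrite last_rcons.
Qed.

Lemma ball_S (R : realType) (V : choiceType) (mu : V -> V -> R) o k :
  ball_k mu o k.+1 `<=` ball_k mu o k `|` \bigcup_(x in ball_k mu o k) nbrs mu x.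
Proof.
move=> y [s [hs hp hl]].
case/lastP: s hs hp hl => [|s z] hs hp hl.
  by left; exists [::]; split.
rewrite size_rcons rcons_path last_rcons in hs hp hl.
case/andP: hp => hp hz; subst z.
right; exists (last o s) => //.
by exists s; split.
Qed.

Lemma ball_finite (R : realType) (V : choiceType) (mu : V -> V -> R) o k :
  locally_finite mu -> finite_set (ball_k mu o k).
Proof.
move=> lf; elim: k => [|k IH]; first by rewrite ball0; exact: finite_set1.
apply: sub_finite_set (@ball_S _ _ mu o k) _.
rewrite finite_setU; split => //.
by apply: bigcup_finite => // x _; exact: lf.
Qed.
Lemma muv_ge0 (R : realType) (V : choiceType) (mu : V -> V -> R) x :
  weighted_graph mu -> 0 <= muv mu x.
Proof. by move=> [_ h0]; apply: fsumr_ge0 => y _; exact: h0. Qed.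

Lemma muset_ge0 (R : realType) (V : choiceType) (mu : V -> V -> R) A :
  weighted_graph mu -> 0 <= muset mu A.
Proof. by move=> wg; apply: fsumr_ge0 => y _; exact: muv_ge0. Qed.

Lemma inner_le (R : realType) (V : choiceType) (mu : V -> V -> R) x A :
  weighted_graph mu -> locally_finite mu ->
  \sum_(y \in A) mu x y <= muv mu x.
Proof.
move=> [_ h0] lf.
have -> : muv mu x = \sum_(y \in [set: V]) mu x y.
  apply: fsbig_widen => // y [_ /= ny]; apply/eqP.
  by rewrite eq_le h0 andbT leNgt; apply/negP => /ny.
apply: fsum_sub_le => //.
apply: sub_finite_set (lf x) => y [_ /= hy].
by rewrite /nbrs /adj /= lt_def h0 andbT; apply/eqP.
Qed.

Lemma bdry_le_prod (R : realType) (V : choiceType) (mu : V -> V -> R) o k :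
  weighted_graph mu -> locally_finite mu ->
  bdry mu o k <= \sum_(e \in ball_k mu o k `*` (ball_k mu o k.+1 `\` ball_k mu o k)) mu e.1 e.2.
Proof.
move=> [_ h0] lf; apply: fsum_sub_le.
- by move=> e; exact: h0.
- move=> [x y] /= [bx nby xy]; split => //=; split => //.
  exact: ball_step bx xy.
- apply: sub_finite_set (@subIsetl _ _ _) _.
  by apply: finite_setX; [exact: ball_finite|apply: sub_finite_set (@subDsetl _ _ _) _; exact: ball_finite].
Qed.

Lemma bdry_le_M (R : realType) (V : choiceType) (mu : V -> V -> R) o k :
  weighted_graph mu -> locally_finite mu ->
  bdry mu o k <= muset mu (ball_k mu o k).
Proof.
move=> wg lf; apply: le_trans (@bdry_le_prod _ _ mu o k wg lf) _.
have Bf := @ball_finite _ _ mu o k lf.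
have Df : finite_set (ball_k mu o k.+1 `\` ball_k mu o k).
  by apply: sub_finite_set (@subDsetl _ _ _) _; exact: ball_finite.
rewrite -(pair_fsbig _ (fun x y => mu x y)) //.
by apply: fsum_le_pw => // x _; exact: inner_le.
Qed.

Lemma bdry_le_diff (R : realType) (V : choiceType) (mu : V -> V -> R) o k :
  weighted_graph mu -> locally_finite mu ->
  bdry mu o k <= muset mu (ball_k mu o k.+1) - muset mu (ball_k mu o k).
Proof.
move=> wg lf; apply: le_trans (@bdry_le_prod _ _ mu o k wg lf) _.
have Bf := @ball_finite _ _ mu o k lf.
have Df : finite_set (ball_k mu o k.+1 `\` ball_k mu o k).
  by apply: sub_finite_set (@subDsetl _ _ _) _; exact: ball_finite.
rewrite -(pair_fsbig _ (fun x y => mu x y)) // exchange_fsbig //.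
have -> : muset mu (ball_k mu o k.+1) - muset mu (ball_k mu o k)
    = muset mu (ball_k mu o k.+1 `\` ball_k mu o k).
  rewrite /muset -{1}(setDUK (@ball_mono _ _ mu o k)) fsbigU0 //.
    by rewrite addrAC subrr add0r.
  by move=> x [bx [_ nbx]].
apply: fsum_le_pw => // y _.
case: wg => [hs h0].
under eq_fsbigr do rewrite hs.
exact: inner_le.
Qed.
Lemma exit_edge (R : realType) (V : choiceType) (mu : V -> V -> R) (B : set V) s :
  forall x, B x -> path (adj mu) x s -> ~ B (last x s) ->
  exists u v, [/\ B u, ~ B v & adj mu u v].
Proof.
elim: s => [|z s IH] x Bx /=; first by [].
case/andP => xz hp hl.
have [Bz|nBz] := pselect (B z).
  exact: IH Bz hp hl.
by exists x, z.
Qed.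

Lemma bdry_gt0 (R : realType) (V : choiceType) (mu : V -> V -> R) o k :
  weighted_graph mu -> locally_finite mu -> connected_graph mu -> infinite_graph V ->
  0 < bdry mu o k.
Proof.
move=> wg lf cg ig.
have Bf := @ball_finite _ _ mu o k lf.
have [y nBy] : exists y, ~ ball_k mu o k y.
  apply: contrapT => hall; apply: ig.
  apply: sub_finite_set Bf => x _; apply: contrapT => nbx; apply: hall.
  by exists x.
have [s [hp hl]] := cg o y.
have Bo : ball_k mu o k o by exists [::]; split.
have [u [v [Bu nBv uv]]] := @exit_edge _ _ mu _ s o Bo hp (ltac:(by rewrite hl)).
apply: (@lt_le_trans _ _ (\sum_(e \in [set (u, v)]) mu e.1 e.2)).
  by rewrite fsbig_set1.
case: (wg) => _ h0.
apply: fsum_sub_le.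
- by move=> e; exact: h0.
- by move=> e /= ->.
- apply: sub_finite_set (@subIsetl _ _ _) _.
  apply: (@sub_finite_set _ _ (ball_k mu o k `*` ball_k mu o k.+1)).
    by move=> [x z] /= [bx nbz xz]; split => //; exact: ball_step bx xz.
  by apply: finite_setX; exact: ball_finite.
Qed.
Theorem lemma6p10 (R : realType) (V : choiceType) (mu : V -> V -> R) (o : V) (p : R) :
  weighted_graph mu -> locally_finite mu -> connected_graph mu -> infinite_graph V ->
  0 < p ->
  (\sum_(1 <= n <oo)
      (n%:R%:E * (\sum_(n <= k <oo) (k%:R / muset mu (ball_k mu o k))%:E) `^ p))%E = +oo%E ->
  (\sum_(1 <= n <oo)
      (n%:R%:E * (\sum_(n <= k <oo) (1 / bdry mu o k)%:E) `^ p))%E = +oo%E.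
Proof.
move=> wg lf cg ig p0 HL.
pose a k := 1 / bdry mu o k.
pose M k := muset mu (ball_k mu o k).
have bp k : 0 < bdry mu o k by exact: bdry_gt0.
have a0 k : 0 <= a k by rewrite /a divr_ge0 // ltW.
have M0 k : 0 <= M k by exact: muset_ge0.
have c0 k : 0 <= k%:R / M k by rewrite divr_ge0.
have cle : forall k, (0 < k)%N ->
    k%:R / M k <= 8 / k%:R * \sum_((k.+1)./2 <= i < k.+1) a i.
  apply: (@keyA R a (bdry mu o) M bp (fun i => erefl)) => // k.
  - exact: bdry_le_M.
  - exact: bdry_le_diff.
have part := @keyB R a (fun k => k%:R / M k) a0 cle.
apply: contrapT => HR.
pose S m := (\sum_(m <= k <oo) (a k)%:E)%E.
pose F n := (n%:R%:E * S n `^ p)%E.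
have F0 n : (0 <= F n)%E by rewrite mule_ge0 ?lee_fin ?poweR_ge0.
have S0 m : (0 <= S m)%E by apply: nneseries_ge0 => i _ _; rewrite lee_fin.
have Fle m : (0 < m)%N -> (F m <= \sum_(1 <= n <oo) F n)%E.
  move=> m0.
  apply: le_trans (nneseries_lim_ge (u_ := F) (P := xpredT) (m := 1) m.+1 (fun n _ _ => F0 n)).
  by rewrite big_nat_recr //= leeDr // sume_ge0.
have Sfin m : (0 < m)%N -> S m \is a fin_num.
  move=> m0; rewrite ge0_fin_numE // ltey; apply/eqP => Sinf; apply: HR.
  apply/eqP; rewrite eq_le leey /=.
  have := Fle m m0; rewrite /F Sinf poweRyr ?gt_eqF // mulry gtr0_sg ?ltr0n //.
  by rewrite mul1e.
pose s m := fine (S m).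
have Se m : (0 < m)%N -> S m = (s m)%:E by move=> m0; rewrite fineK // Sfin.
have s0 m : 0 <= s m by rewrite /s fine_ge0.
pose T n := (\sum_(n <= k <oo) (k%:R / M k)%:E)%E.
have T0 n : (0 <= T n)%E by apply: nneseries_ge0 => i _ _; rewrite lee_fin.
have Tle n : (0 < n)%N -> (T n <= (16 * s ((n.+1)./2))%:E)%E.
  move=> n0; apply: lime_le.
    by apply: is_cvg_ereal_nneg_natsum => i _; rewrite lee_fin.
  apply: nearW => N; rewrite sumEFin lee_fin.
  apply: le_trans (part n N n0) _; rewrite ler_wpM2l //.
  have h0 : (0 < (n.+1)./2)%N by lia.
  have := nneseries_lim_ge (u_ := fun k => (a k)%:E) (P := xpredT) (m := (n.+1)./2) N
    (fun i _ _ => a0 i).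
  by rewrite sumEFin -/(S _) Se // lee_fin.
pose t n := fine (T n).
have Te n : (0 < n)%N -> T n = (t n)%:E.
  by move=> n0; rewrite fineK // ge0_fin_numE // (le_lt_trans (Tle n n0)) // ltry.
have ht0 (k : nat) : 0 <= t k by rewrite /t fine_ge0.
have tle (j : nat) : (0 < j)%N -> t j <= 16 * s ((j.+1)./2).
  by move=> j0; rewrite -lee_fin -Te // Tle.
have RHS0 : (0 <= \sum_(1 <= n <oo) F n)%E by apply: nneseries_ge0 => i _ _.
have RHSfin : (\sum_(1 <= n <oo) F n)%E \is a fin_num.
  by rewrite ge0_fin_numE // ltey; apply/eqP.
pose r := fine (\sum_(1 <= n <oo) F n)%E.
have Fpart N : \sum_(1 <= m < N) m%:R * s m `^ p <= r.
  rewrite -lee_fin /r fineK // -sumEFin.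
  apply: le_trans (nneseries_lim_ge (u_ := F) (P := xpredT) (m := 1) N (fun n _ _ => F0 n)).
  rewrite le_eqVlt; apply/orP; left; apply/eqP.
  rewrite big_nat [X in _ = X]big_nat; apply: eq_bigr => m /andP[m0 _].
  by rewrite /F Se // poweR_EFin.
have : (\sum_(1 <= n <oo) (n%:R%:E * T n `^ p) <= (16 `^ p * (4 * r))%:E)%E.
  apply: lime_le.
    apply: is_cvg_ereal_nneg_natsum => i _; by rewrite mule_ge0 ?lee_fin ?poweR_ge0.
  apply: nearW => N.
  have -> : (\sum_(1 <= n < N) (n%:R%:E * T n `^ p) = (\sum_(1 <= n < N) n%:R * t n `^ p)%:E)%E.
    rewrite -sumEFin big_nat [X in _ = X]big_nat; apply: eq_bigr => n /andP[n0 _].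
    by rewrite Te // poweR_EFin.
  rewrite lee_fin.
  apply: (@le_trans _ _ (\sum_(1 <= n < N) n%:R * (16 `^ p * s ((n.+1)./2) `^ p))).
    apply: ler_sum_nat => n /andP[n0 _]; rewrite ler_wpM2l //.
    rewrite -powRM // ?mulr_ge0 //.
    apply: ge0_ler_powR; [exact: ltW | by rewrite nnegrE | by rewrite nnegrE mulr_ge0 | exact: tle].
  under eq_bigr do rewrite mulrCA.
  rewrite -mulr_sumr ler_wpM2l ?powR_ge0 //.
  apply: le_trans (@pairing R (fun m => s m `^ p) (fun m => powR_ge0 _ _) N) _.
  by rewrite ler_wpM2l.
by rewrite HL leye_eq.
Qed.
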